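(* For the system $\dot x=f_\sigma(x)$ described in the context, for every $\sigma\in\{0,1\}^{|\tilde{\mathcal L}|}$ there exists $x^*$ with $f_\sigma(x^* )=0$. Moreover, every equilibrium $z^*=(x^*,\sigma)$ (i.e. $f_\sigma(x^* )=0$), with $x^*=(\eta^*,\omega^*,p^{M,*},p^{c,*},\psi^* )$, satisfies $\omega^*=\mathbf 0_{|\mathcal N|}$ and $p^{c,*}\in\operatorname{Im}(\mathbf 1_{|\mathcal N|})$.
   Context: Power network $(\mathcal N,\mathcal E)$: connected directed graph, $\mathcal N=\{1,\dots,|\mathcal N|\}$, arbitrarily oriented ($(i,j)\in\mathcal E\Rightarrow(j,i)\notin\mathcal E$), $\mathcal N^p_j=\{k:(k,j)\in\mathcal E\}$, $\mathcal N^s_j=\{k:(j,k)\in\mathcal E\}$; communication network $(\mathcal N,\tilde{\mathcal E})$ connected directed. For $j\in\mathcal N$, $\mathcal L_j$ is a finite set of on-off loads, $\tilde{\mathcal L}=\{(l,j):l\in\mathcal L_j,j\in\mathcal N\}$, load magnitudes $\overline d_{l,j}>0$. Constants $M_j,\gamma_j,\kappa_j,A_j,\tau_j>0$, $p^L_j\in\mathbb R$, $B_{ij}>0$ ($(i,j)\in\mathcal E$), $\tau_{ij}>0$ ($(i,j)\in\tilde{\mathcal E}$). For $x=(\eta,\omega,p^M,p^c,\psi)\in\mathbb R^n$, $n=3|\mathcal N|+|\mathcal E|+|\tilde{\mathcal E}|$, and $\sigma\in\{0,1\}^{|\tilde{\mathcal L}|}$, $f_\sigma(x)$ is the vector field given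 by $\dot\eta_{ij}=\omega_i-\omega_j$ ($(i,j)\in\mathcal E$); $M_j\dot\omega_j=p^M_j-p^L_j-A_j\omega_j-\sum_{l\in\mathcal L_j}\overline d_{l,j}\sigma_{l,j}-\sum_{k\in\mathcal N^s_j}B_{jk}\eta_{jk}+\sum_{i\in\mathcal N^p_j}B_{ij}\eta_{ij}$; $\gamma_j\dot p^M_j=-(p^M_j+\kappa_j\omega_j-\kappa_jp^c_j)$; $\tau_{ij}\dot\psi_{ij}=p^c_i-p^c_j$ ($(i,j)\in\tilde{\mathcal E}$); $\tau_j\dot p^c_j=-p^M_j+p^L_j+\sum_{l\in\mathcal L_j}\overline d_{l,j}\sigma_{l,j}-\sum_{k:(j,k)\in\tilde{\mathcal E}}\psi_{jk}+\sum_{i:(i,j)\in\tilde{\mathcal E}}\psi_{ij}$. *)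

(* Defs.v *)
From HB Require Import structures.
From mathcomp Require Import all_boot all_order all_algebra.
Set Implicit Arguments. Unset Strict Implicit. Unset Printing Implicit Defensive.
Import Order.TTheory GRing.Theory Num.Theory.
Local Open Scope ring_scope.

Definition edge {N : nat} (E : {set 'I_N * 'I_N}) := {e : 'I_N * 'I_N | e \in E}.

Definition weakly_connected {N : nat} (E : {set 'I_N * 'I_N}) : Prop :=
  forall i j : 'I_N, connect (fun a b => ((a, b) \in E) || ((b, a) \in E)) i j.

Definition oriented {N : nat} (E : {set 'I_N * 'I_N}) : Prop :=
  forall i j : 'I_N, (i, j) \in E -> (j, i) \notin E.

(* State x = (eta, omega, p^M, p^c, psi) in R^n,
   n = 3|N| + |E| + |E~| (eta indexed by power edges, psi by comm. edges). *)
Record state (R : realFieldType) (N : nat)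
    (E Ec : {set 'I_N * 'I_N}) := State {
  eta   : {ffun edge E -> R};
  omega : {ffun 'I_N -> R};
  pM    : {ffun 'I_N -> R};
  pc    : {ffun 'I_N -> R};
  psi   : {ffun edge Ec -> R}
}.
Arguments state R {N} E Ec.

Section Field.
Variables (R : realFieldType) (N : nat) (E Ec : {set 'I_N * 'I_N}).
(* Loads: a finite type Ld of on-off loads, loc l = the bus j with l in L_j;
   so Ld is L~ = {(l,j) : l in L_j}. *)
Variables (Ld : finType) (loc : Ld -> 'I_N) (dbar : Ld -> R).
Variables (M gam kap A tau pL : 'I_N -> R).
Variables (B : edge E -> R) (tauc : edge Ec -> R).

Definition load (sigma : Ld -> bool) (j : 'I_N) : R :=
  \sum_(l : Ld | loc l == j) dbar l * (sigma l)%:R.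

Definition vfield (sigma : Ld -> bool) (x : state R E Ec) : state R E Ec :=
  State
    [ffun e : edge E => omega x (val e).1 - omega x (val e).2]
    [ffun j : 'I_N => (M j)^-1 *
        (pM x j - pL j - A j * omega x j - load sigma j
         - \sum_(e : edge E | (val e).1 == j) B e * eta x e
         + \sum_(e : edge E | (val e).2 == j) B e * eta x e)]
    [ffun j : 'I_N => - (gam j)^-1 * (pM x j + kap j * omega x j - kap j * pc x j)]
    [ffun j : 'I_N => (tau j)^-1 *
        (- pM x j + pL j + load sigma j
         - \sum_(e : edge Ec | (val e).1 == j) psi x e
         + \sum_(e : edge Ec | (val e).2 == j) psi x e)]
    [ffun e : edge Ec => (tauc e)^-1 * (pc x (val e).1 - pc x (val e).2)].

Definition zero_state : state R E Ec :=
  State [ffun=> 0] [ffun=> 0] [ffun=> 0] [ffun=> 0] [ffun=> 0].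

Definition equilibrium (sigma : Ld -> bool) (x : state R E Ec) : Prop :=
  vfield sigma x = zero_state.
End Field.

(* Main.v *)
Require Import Defs.
From HB Require Import structures.
From mathcomp Require Import all_boot all_order all_algebra.
From mathcomp Require Import ring lra.
Import Order.TTheory GRing.Theory Num.Theory.
Local Open Scope ring_scope.

Section Flow.
Variables (R : realFieldType) (N : nat) (E : {set 'I_N * 'I_N}).

Definition D (f : edge E -> R) (j : 'I_N) : R :=
  \sum_(e : edge E | (val e).1 == j) f e - \sum_(e : edge E | (val e).2 == j) f e.

Lemma D0 j : D (fun _ => 0) j = 0.
Proof. by rewrite /D !big1 ?subrr. Qed.

Lemma DD f g j : D (fun e => f e + g e) j = D f j + D g j.
Proof. rewrite /D !big_split /=; ring. Qed.

Lemma DZ a f j : D (fun e => a * f e) j = a * D f j.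
Proof. by rewrite /D -!mulr_sumr mulrBr. Qed.

Lemma sum_ind (P : edge E -> bool) (e0 : edge E) :
  \sum_(e : edge E | P e) ((e == e0)%:R : R) = (P e0)%:R.
Proof.
rewrite big_mkcond (bigD1 e0) //= eqxx big1 ?addr0.
  by case: (P e0).
by move=> e /negbTE ->; case: (P e).
Qed.

Lemma D1 (e0 : edge E) j :
  D (fun e => (e == e0)%:R) j = (j == (val e0).1)%:R - (j == (val e0).2)%:R.
Proof. by rewrite /D !sum_ind ![j == _]eq_sym. Qed.

Lemma sumD f : \sum_j D f j = 0.
Proof.
rewrite /D sumrB.
have H (k : edge E -> 'I_N) : \sum_j \sum_(e : edge E | k e == j) f e = \sum_e f e.
  rewrite (exchange_big_dep predT) //=; apply: eq_bigr => e _.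
  by rewrite (eq_bigl (fun j => j == k e)) ?big_pred1_eq // => j; rewrite eq_sym.
by rewrite (H (fun e => (val e).1)) (H (fun e => (val e).2)) subrr.
Qed.

Lemma step_flow (s t : 'I_N) :
  connect (fun a b => ((a, b) \in E) || ((b, a) \in E)) s t ->
  exists f : edge E -> R, forall j, D f j = (j == s)%:R - (j == t)%:R.
Proof.
move=> /connectP [p]; elim: p s => [|a p IH] s /=.
  move=> _ ->; exists (fun _ => 0) => j; by rewrite D0 subrr.
move=> /andP [Hsa Hp] Ht.
have [f1 Hf1] := IH a Hp Ht.
have [f2 Hf2] : exists f : edge E -> R, forall j, D f j = (j == s)%:R - (j == a)%:R.
  case/orP: Hsa => H.
    exists (fun e => ((e == exist _ (s, a) H)%:R)) => j; by rewrite D1.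
  exists (fun e => -1 * ((e == exist _ (a, s) H)%:R)) => j; rewrite DZ D1 /=; ring.
exists (fun e => f2 e + f1 e) => j; rewrite DD Hf1 Hf2; ring.
Qed.

Lemma flow_exists (i0 : 'I_N) : weakly_connected E ->
  forall b : 'I_N -> R, \sum_j b j = 0 ->
  exists f : edge E -> R, forall j, D f j = b j.
Proof.
move=> Hc b Hb.
have key : forall r : seq 'I_N, exists f : edge E -> R, forall j,
    D f j = \sum_(s <- r) b s * ((j == s)%:R - (j == i0)%:R).
  elim => [|s r [f Hf]].
    by exists (fun _ => 0) => j; rewrite big_nil D0.
  have [g Hg] := @step_flow s i0 (Hc s i0).
  exists (fun e => b s * g e + f e) => j.
  by rewrite big_cons DD DZ Hg Hf.
have [f Hf] := key (index_enum _).
exists f => j; rewrite Hf.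
under eq_bigr do rewrite mulrBr.
rewrite sumrB -big_distrl /= Hb mul0r subr0.
rewrite (bigD1 j) //= eqxx mulr1 big1 ?addr0 // => i /negbTE.
by rewrite eq_sym => ->; rewrite mulr0.
Qed.

Lemma const_conn (g : 'I_N -> R) : weakly_connected E ->
  (forall e : edge E, g (val e).1 = g (val e).2) -> forall i j, g i = g j.
Proof.
move=> Hc Hg i j; have /connectP [p] := Hc i j.
elim: p i => [|a p IH] i /=; first by move=> _ ->.
move=> /andP [Hia Hp] Hj; rewrite -(IH a Hp Hj).
case/orP: Hia => H; first exact: (Hg (exist _ (i, a) H)).
exact: esym (Hg (exist _ (a, i) H)).
Qed.

End Flow.

Lemma inv_mul0 (R : realFieldType) (a x : R) : 0 < a -> a^-1 * x = 0 -> x = 0.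
Proof.
move=> Ha /eqP; rewrite mulf_eq0 invr_eq0 => /orP [/eqP H|/eqP //].
by move: Ha; rewrite H ltxx.
Qed.

Theorem lemma3 (R : realFieldType) (N : nat) (E Ec : {set 'I_N * 'I_N})
  (Ld : finType) (loc : Ld -> 'I_N) (dbar : Ld -> R)
  (M gam kap A tau pL : 'I_N -> R) (B : edge E -> R) (tauc : edge Ec -> R) :
  (0 < N)%N ->
  oriented E -> weakly_connected E -> weakly_connected Ec ->
  (forall l, 0 < dbar l) ->
  (forall j, 0 < M j) -> (forall j, 0 < gam j) -> (forall j, 0 < kap j) ->
  (forall j, 0 < A j) -> (forall j, 0 < tau j) ->
  (forall e, 0 < B e) -> (forall e, 0 < tauc e) ->
  (forall sigma : Ld -> bool, exists x : state R E Ec,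
     equilibrium loc dbar M gam kap A tau pL B tauc sigma x) /\
  (forall (sigma : Ld -> bool) (x : state R E Ec),
     equilibrium loc dbar M gam kap A tau pL B tauc sigma x ->
     (forall j, omega x j = 0) /\ (exists c : R, forall j, pc x j = c)).
Proof.
move=> HN _ HcE HcEc _ HM Hgam Hkap HA Htau HB Htauc.
split.
  move=> sigma.
  set L := load loc dbar sigma.
  have Hk : 0 < \sum_j kap j.
    rewrite (bigD1 (Ordinal HN)) //=; apply: ltr_pwDl => //.
    by apply: sumr_ge0 => i _; apply: ltW.
  set c := (\sum_j (pL j + L j)) / (\sum_j kap j).
  set bE := fun j => kap j * c - pL j - L j.
  have HbE : \sum_j bE j = 0.
    rewrite /bE !sumrB -big_distrl /= /c mulrC mulfVK ?gt_eqF // big_split /=.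
    ring.
  have [fE HfE] := @flow_exists R N E (Ordinal HN) HcE bE HbE.
  have HbE' : \sum_j (- bE j) = 0 by rewrite sumrN HbE oppr0.
  have [fc Hfc] := @flow_exists R N Ec (Ordinal HN) HcEc (fun j => - bE j) HbE'.
  exists (State [ffun e => fE e / B e] [ffun=> 0] [ffun j => kap j * c] [ffun=> c]
            [ffun e => fc e]).
  rewrite /equilibrium /vfield /zero_state /=; congr State; apply/ffunP => j; rewrite !ffunE /=.
  - by rewrite subrr.
  - have HBf : forall e, B e * [ffun e0 => fE e0 / B e0] e = fE e.
      by move=> e; rewrite ffunE mulrC divfK ?gt_eqF.
    rewrite !(eq_bigr _ (fun e _ => HBf e)).
    have := HfE j; rewrite /D /bE -/L => H.
    apply/eqP; rewrite mulf_eq0; apply/orP; right; apply/eqP; lra.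
  - by rewrite mulr0 addr0 subrr mulr0.
  - have HBf : forall e, [ffun e0 => fc e0] e = fc e by move=> e; rewrite ffunE.
    rewrite !(eq_bigr _ (fun e _ => HBf e)).
    have := Hfc j; rewrite /D /bE -/L => H.
    apply/eqP; rewrite mulf_eq0; apply/orP; right; apply/eqP; lra.
  - by rewrite subrr mulr0.
move=> sigma x; rewrite /equilibrium => H.
have Hom : forall e : edge E, omega x (val e).1 = omega x (val e).2.
  move=> e; have := congr1 (fun s : state R E Ec => Defs.eta s e) H; rewrite /= !ffunE => /eqP.
  by rewrite subr_eq0 => /eqP.
have Hpc : forall e : edge Ec, pc x (val e).1 = pc x (val e).2.
  move=> e; have := congr1 (fun s : state R E Ec => psi s e) H; rewrite /= !ffunE => /(@inv_mul0 _ _ _ (Htauc e)) /eqP.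
  by rewrite subr_eq0 => /eqP.
have Hw := @const_conn R N E (omega x) HcE Hom.
have Hp := @const_conn R N Ec (pc x) HcEc Hpc.
split; last by exists (pc x (Ordinal HN)) => j; apply: Hp.
have S : \sum_j A j * omega x j + \sum_j @D R N E (fun e => B e * Defs.eta x e) j + \sum_j @D R N Ec (psi x) j = 0.
  rewrite -!big_split; apply: big1 => j _ /=.
  have := congr1 (fun s : state R E Ec => omega s j) H; rewrite /= !ffunE => /(@inv_mul0 _ _ _ (HM j)) H1.
  have := congr1 (fun s : state R E Ec => pc s j) H; rewrite /= !ffunE => /(@inv_mul0 _ _ _ (Htau j)) H2.
  rewrite /D; lra.
rewrite (@sumD R N E) (@sumD R N Ec) !addr0 in S.
have HA' : 0 < \sum_j A j.
  rewrite (bigD1 (Ordinal HN)) //=; apply: ltr_pwDl => //.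
  by apply: sumr_ge0 => i _; apply: ltW.
have S' : \sum_j A j * omega x (Ordinal HN) = 0.
  by rewrite -[RHS]S; apply: eq_bigr => j _; rewrite (Hw j (Ordinal HN)).
move: S'; rewrite -big_distrl /= => /eqP; rewrite mulf_eq0 => /orP [/eqP H0|/eqP H0].
  by move: HA'; rewrite H0 ltxx.
by move=> j; rewrite (Hw j (Ordinal HN)).
Qed.
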